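(* Let $(V,\mathcal H,\iota,W)$ be an abelian functional theory with set of weights $\Omega$ and let $\rho\in\mathrm{conv}(\Omega)$. Then $\rho$ is a critical value of the smooth map $\iota^*|_{\mathcal P}:\mathcal P\to\mathrm{aff}(\Omega)$ if and only if $\rho$ lies in the convex hull of some $\dim\mathrm{conv}(\Omega)$ $(=\dim V-\dim\iota^{-1}(\mathrm{span}\{\mathbb 1\}))$ weights.
   Context: A generalized functional theory is a tuple $(V,\mathcal H,\iota,W)$ with $V$ a finite-dimensional real vector space, $\mathcal H$ a finite-dimensional complex Hilbert space, $\iota:V\to i\mathfrak u(\mathcal H)$ linear into the Hermitian operators, $W$ Hermitian; it is abelian if all $\iota(v)$ commute. States are regarded as linear functionals on $i\mathfrak u(\mathcal H)$ via the trace and $\iota^*$ is the dual map; $\mathcal P$, the set of pure states, is a smooth manifold (projective space). A weight is $\alpha\in V^*$ such that some nonzero $\psi$ satisfies $\iota(v)\psi=\langle\alpha,v\rangle\psi$ for all $v$; $\Omega$ is the set of weights, and $\iota^*(\mathcal P)=\mathrm{conv}(\Omega)$. A point is a critical value of a smooth map if it is not a regular value, i.e. the derivative fails to be surjective at some point of its preimage. *)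

(* Defs.v *)
From HB Require Import structures.
From mathcomp Require Import all_boot all_order all_algebra.
From mathcomp Require Import reals complex.
Set Implicit Arguments. Unset Strict Implicit. Unset Printing Implicit Defensive.
Import Order.TTheory GRing.Theory Num.Theory.
Local Open Scope ring_scope.
Local Open Scope complex_scope.

Section GFT.
Variables (R : realType) (n d : nat).
Local Notation C := R[i].

Definition adjmx (p q : nat) (M : 'M[C]_(p, q)) : 'M[C]_(q, p) :=
  (map_mx (@conjc R) M)^T.

Definition herm_op (M : 'M[C]_n) : Prop := adjmx M = M.

Definition inner (x y : 'cV[C]_n) : C := (adjmx x *m y) 0 0.

(* V = R^d (coordinates w.r.t. a basis); iota is the linear map with
   iota (e_k) = A k; V^* is identified with 'rV[R]_d via the pairing below. *)
Definition iota (A : 'I_d -> 'M[C]_n) (v : 'rV[R]_d) : 'M[C]_n :=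
  \sum_(k < d) (v 0 k)%:C *: A k.

Definition pairing (a v : 'rV[R]_d) : R := \sum_(k < d) a 0 k * v 0 k.

Definition abelian_theory (A : 'I_d -> 'M[C]_n) : Prop :=
  forall v w : 'rV[R]_d, iota A v *m iota A w = iota A w *m iota A v.

Definition weight (A : 'I_d -> 'M[C]_n) (a : 'rV[R]_d) : Prop :=
  exists psi : 'cV[C]_n, psi != 0 /\
    forall v : 'rV[R]_d, iota A v *m psi = (pairing a v)%:C *: psi.

Definition in_conv (S : 'rV[R]_d -> Prop) (rho : 'rV[R]_d) : Prop :=
  exists m (w : 'I_m -> 'rV[R]_d) (l : 'I_m -> R),
    (forall i, S (w i)) /\ (forall i, 0 <= l i) /\ \sum_(i < m) l i = 1 /\
    rho = \sum_(i < m) l i *: w i.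

(* the linear space parallel to aff(Omega): span of differences of weights *)
Definition aff_dir (A : 'I_d -> 'M[C]_n) (w : 'rV[R]_d) : Prop :=
  exists m (a b : 'I_m -> 'rV[R]_d) (c : 'I_m -> R),
    (forall i, weight A (a i)) /\ (forall i, weight A (b i)) /\
    w = \sum_(i < m) c i *: (a i - b i).

Definition diff_family (A : 'I_d -> 'M[C]_n) m (D : 'M[R]_(m, d)) : Prop :=
  forall i, exists a b, weight A a /\ weight A b /\ row i D = a - b.

(* dim conv(Omega) = dim aff(Omega) = dim of the span of differences *)
Definition conv_dim (A : 'I_d -> 'M[C]_n) (r : nat) : Prop :=
  (exists m (D : 'M[R]_(m, d)), diff_family A D /\ \rank D = r) /\
  (forall m (D : 'M[R]_(m, d)), diff_family A D -> (\rank D <= r)%N).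

(* iota^* restricted to pure states, on unit representatives psi of [psi] in P:
   <iota^*(|psi><psi|), e_k> = tr(|psi><psi| A_k) = <psi, A_k psi>. *)
Definition istar (A : 'I_d -> 'M[C]_n) (psi : 'cV[C]_n) : 'rV[R]_d :=
  \row_k complex.Re (inner psi (A k *m psi)).

(* its differential at psi in the direction phi (the map psi |-> <psi,A_k psi>
   is a real quadratic form on C^n = R^(2n); this is its derivative) *)
Definition distar (A : 'I_d -> 'M[C]_n) (psi phi : 'cV[C]_n) : 'rV[R]_d :=
  \row_k complex.Re (inner phi (A k *m psi) + inner psi (A k *m phi)).

(* rho is a critical value of iota^*|_P : P -> aff(Omega): at some pure state
   [psi] (psi a unit vector) in the preimage, the differential is not onto the
   tangent space of aff(Omega).  The tangent space of P at [psi] is the image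
   of T_psi S(H) = {phi | Re <psi,phi> = 0} under the submersion S(H) -> P. *)
Definition critical_value (A : 'I_d -> 'M[C]_n) (rho : 'rV[R]_d) : Prop :=
  exists psi : 'cV[C]_n, inner psi psi = 1 /\ istar A psi = rho /\
    exists w, aff_dir A w /\
      forall phi : 'cV[C]_n, complex.Re (inner psi phi) = 0 -> distar A psi phi <> w.

End GFT.

(* Main.v *)
Require Import Defs.
From HB Require Import structures.
From mathcomp Require Import all_boot all_order all_algebra.
From mathcomp Require Import reals complex.
Import Order.TTheory GRing.Theory Num.Theory.
Local Open Scope ring_scope.
From mathcomp Require Import spectral sesquilinear.
From mathcomp Require Import ring lra.
Set Implicit Arguments. Unset Strict Implicit. Unset Printing Implicit Defensive.
Import Order.TTheory GRing.Theory Num.Theory.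
Local Open Scope ring_scope.
Local Open Scope complex_scope.

Section CHelp.
Variable R : realType.
Local Notation C := R[i].
Lemma cReD (x y : C) : complex.Re (x + y) = complex.Re x + complex.Re y.
Proof. by case: x; case: y. Qed.
Lemma cRe0 : complex.Re (0 : C) = 0. Proof. by []. Qed.
Lemma cRe_sum I (s : seq I) (P : pred I) (F : I -> C) :
  complex.Re (\sum_(i <- s | P i) F i) = \sum_(i <- s | P i) complex.Re (F i).
Proof. exact: (big_morph _ cReD cRe0). Qed.
Lemma cReMr (x : R) (y : C) : complex.Re (x%:C * y) = x * complex.Re y.
Proof. by case: y => a b /=; rewrite !mul0r subr0. Qed.
Lemma cReMl (x : R) (y : C) : complex.Re (y * x%:C) = complex.Re y * x.
Proof. by rewrite mulrC cReMr mulrC. Qed.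
Lemma cRe_real (x : R) : complex.Re (x%:C) = x. Proof. by []. Qed.
Lemma conjc_adj (x : C) : Num.conj x = conjc x. Proof. by []. Qed.
Lemma cRe_conj (x : C) : complex.Re (conjc x) = complex.Re x. Proof. by case: x. Qed.
Lemma creal_conj (x : C) : conjc x = x -> x = (complex.Re x)%:C.
Proof. case: x => a b /= [] E; have -> : b = 0 by lra. by []. Qed.
Lemma cRc_sum I (s : seq I) (P : pred I) (F : I -> R) :
  (\sum_(i <- s | P i) F i)%:C = \sum_(i <- s | P i) (F i)%:C :> C.
Proof. by rewrite rmorph_sum. Qed.
Lemma cnorm_ge0 (x : C) : 0 <= complex.Re (conjc x * x).
Proof. case: x => a b /=; nra. Qed.
Lemma cnorm_eq0 (x : C) : complex.Re (conjc x * x) = 0 -> x = 0.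
Proof.
case: x => a b /= h.
have ha : a = 0 by nra.
have hb : b = 0 by nra.
by rewrite ha hb.
Qed.
Lemma cRe_conj_sym (x y : C) : complex.Re (conjc x * y) = complex.Re (conjc y * x).
Proof. case: x => a b; case: y => c e /=; ring. Qed.
Lemma conj_real_mul (a : R) : conjc (a%:C) * a%:C = (a * a)%:C.
Proof. by rewrite conjc_real rmorphM. Qed.
Lemma cconjM (x y : C) : conjc (x * y) = conjc x * conjc y.
Proof. case: x => a b; case: y => c e /=; congr (_ +i* _); ring. Qed.
End CHelp.

Section Spec.
Variables (R : realType) (n d : nat) (A : 'I_d -> 'M[R[i]]_n).
Hypotheses (hA : forall k, herm_op (A k)) (hab : abelian_theory A).
Local Notation C := R[i].

Lemma adjmxE p q (M : 'M[C]_(p, q)) : adjmx M = map_mx Num.conj (trmx M).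
Proof. by rewrite /adjmx map_trmx. Qed.
Lemma adjmxM p q s (M : 'M[C]_(p, q)) (N : 'M[C]_(q, s)) :
  adjmx (M *m N) = adjmx N *m adjmx M.
Proof. by rewrite /adjmx map_mxM trmx_mul. Qed.
Lemma adjmxK p q (M : 'M[C]_(p, q)) : adjmx (adjmx M) = M.
Proof. by apply/matrixP => i j; rewrite !mxE conjcK. Qed.
Lemma adjmx_entry p q (M : 'M[C]_(p, q)) i j : adjmx M i j = conjc (M j i).
Proof. by rewrite !mxE. Qed.

Lemma iota_delta k : Defs.iota A (delta_mx 0 k) = A k.
Proof.
rewrite /Defs.iota (bigD1 k) //= big1 => [|j /negbTE jk]; last by rewrite mxE jk andbF scale0r.
by rewrite mxE !eqxx addr0 scale1r.
Qed.

Lemma Acomm k l : A k *m A l = A l *m A k.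
Proof. by have := hab (delta_mx 0 k) (delta_mx 0 l); rewrite !iota_delta. Qed.

Lemma spectral_ex : exists P : 'M[C]_n,
  [/\ P *m adjmx P = 1%:M, adjmx P *m P = 1%:M,
   (forall k i j, i != j -> (P *m A k *m adjmx P) i j = 0) &
   (forall k i, conjc ((P *m A k *m adjmx P) i i) = (P *m A k *m adjmx P) i i)].
Proof.
have hc : {in [seq A k | k <- enum 'I_d] &, forall X Y : 'M[C]_n, comm_mx X Y}.
  by move=> X Y /mapP [k _ ->] /mapP [l _ ->]; apply: Acomm.
have [P Pu /allP Ptr] := cotrigonalization hc.
have PP : P *m adjmx P = 1%:M by rewrite adjmxE; apply/unitarymxP.
have PP' : adjmx P *m P = 1%:M by apply: mulmx1C.
have hT k : adjmx (P *m A k *m adjmx P) = P *m A k *m adjmx P.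
  by rewrite !adjmxM adjmxK hA mulmxA.
have trk k : is_trig_mx (P *m A k *m adjmx P).
  have := Ptr (A k) (map_f _ (mem_enum _ k)).
  by rewrite inE /similar_to /conjmx (pinvmx_unitary Pu) adjmxE.
exists P; split => //.
- move=> k i j ij; case: (ltngtP i j) => [lt|gt|eq].
  + by apply/(is_trig_mxP (trk k)).
  + by rewrite -hT adjmx_entry (is_trig_mxP (trk k)) // conjc0.
  + by move: ij; rewrite (val_inj eq) eqxx.
- by move=> k i; rewrite -adjmx_entry hT.
Qed.
End Spec.

Section LinAlg.
Variables (R : realType) (d : nat).
Local Notation V := 'rV[R]_d.

Lemma subB_sub m1 m2 (X Y : 'M[R]_(m1, d)) (M : 'M[R]_(m2, d)) :
  (X <= M)%MS -> (Y <= M)%MS -> (X - Y <= M)%MS.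
Proof. by move=> hX hY; rewrite addmx_sub // eqmx_opp. Qed.

Definition dmx u (q : 'I_u.+1 -> V) : 'M[R]_(u, d) :=
  \matrix_(j < u) (q (lift ord0 j) - q ord0).

Lemma dmx_sub u (q : 'I_u.+1 -> V) j : (q j - q ord0 <= dmx q)%MS.
Proof.
case: (unliftP ord0 j) => [j' ->|->]; last by rewrite subrr sub0mx.
by have := row_sub j' (dmx q); rewrite /dmx rowK.
Qed.

Lemma dmx_sub2 u (q : 'I_u.+1 -> V) j j' : (q j - q j' <= dmx q)%MS.
Proof.
have -> : q j - q j' = (q j - q ord0) - (q j' - q ord0) by rewrite opprB addrA subrK.
by apply: subB_sub; apply: dmx_sub.
Qed.

Lemma rank_diffs u m (q : 'I_u.+1 -> V) (D : 'M[R]_(m, d)) :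
  (forall i, exists j j', row i D = q j - q j') -> (\rank D <= u)%N.
Proof.
move=> hD; apply: (leq_trans (mxrankS _)) (rank_leq_row (dmx q)).
by apply/row_subP => i; have [j [j' ->]] := hD i; apply: dmx_sub2.
Qed.

End LinAlg.

Local Open Scope ring_scope.

Section Carath.
Variables (R : realType) (d : nat).
Local Notation V := 'rV[R]_d.

Lemma carath k (q : 'I_k -> V) (S : {set 'I_k}) b (B : 'M[R]_(b, d)) (r : nat) :
  (\rank B < r)%N -> (forall i j, i \in S -> j \in S -> (q i - q j <= B)%MS) ->
  forall l : 'I_k -> R, (forall i, 0 <= l i) -> (forall i, l i != 0 -> i \in S) ->
  exists l' : 'I_k -> R, [/\ (forall i, 0 <= l' i), (forall i, l' i != 0 -> i \in S),
     \sum_i l' i = \sum_i l i, \sum_i l' i *: q i = \sum_i l i *: q i &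
     (#|[set i | l' i != 0%R]| <= r)%N].
Proof.
move=> hB hS.
suff H : forall N (l : 'I_k -> R), (#|[set i | l i != 0%R]| <= N)%N -> (forall i, 0 <= l i) ->
    (forall i, l i != 0 -> i \in S) ->
  exists l' : 'I_k -> R, [/\ (forall i, 0 <= l' i), (forall i, l' i != 0 -> i \in S),
     \sum_i l' i = \sum_i l i, \sum_i l' i *: q i = \sum_i l i *: q i &
     (#|[set i | l' i != 0%R]| <= r)%N].
  by move=> l; apply: (H _ l (leqnn _)).
elim=> [|N IH] l hN hl0 hlS.
  by exists l; split=> //; rewrite (leq_trans hN).
case: (leqP #|[set i | l i != 0]| r) => hr; first by exists l.
set T := [set i | l i != 0] in hN hr.
have [t0 t0T] : exists t0, t0 \in T.
  by apply/set0Pn; rewrite -card_gt0 (leq_ltn_trans (leq0n r) hr).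
set T' := T :\ t0.
have hT' : #|T| = #|T'|.+1 by rewrite (cardsD1 t0 T) t0T.
have evT j : @enum_val _ (mem T') j \in T.
  by have := enum_valP j; rewrite in_setD1 => /andP[].
have evt0 j : (@enum_val _ (mem T') j == t0) = false.
  by have := enum_valP j; rewrite in_setD1 => /andP[/negbTE].
have TS i : i \in T -> i \in S by rewrite inE; apply: hlS.
pose Q := \matrix_(j < #|T'|) (q (enum_val j) - q t0).
have QB : (Q <= B)%MS.
  by apply/row_subP => j; rewrite rowK; apply: hS; apply: TS.
have rQ : ~~ row_free Q.
  rewrite /row_free; apply/negP => /eqP hQ; have := mxrankS QB; rewrite hQ => h.
  have := leq_ltn_trans h hB; rewrite hT' in hr; move: hr; rewrite ltnS => h1 h2.
  by have := leq_ltn_trans h1 h2; rewrite ltnn.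
have [x xn0 xQ] : exists2 x : 'rV_#|T'|, x != 0 & x *m Q = 0.
  have : kermx Q != 0 by rewrite kermx_eq0.
  case/matrix0Pn => i [j hij]; exists (row i (kermx Q)).
    by apply/matrix0Pn; exists 0, j; rewrite mxE.
  by rewrite -row_mul mulmx_ker row0.
pose mu i := \sum_(j | enum_val j == i) x 0 j - (i == t0)%:R * \sum_j x 0 j.
have part (U : zmodType) (F : 'I_#|T'| -> U) : \sum_i \sum_(j | @enum_val _ (mem T') j == i) F j = \sum_j F j.
  by rewrite (partition_big (@enum_val _ (mem T')) predT) //.
have pick1 (c : R) : \sum_i (i == t0)%:R * c = c.
  rewrite (bigD1 t0) //= eqxx mul1r big1 ?addr0 // => i /negbTE ->; by rewrite mul0r.
have mu_sum : \sum_i mu i = 0.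
  by rewrite sumrB part pick1 subrr.
have mu_q : \sum_i mu i *: q i = 0.
  have E1 : x *m Q = \sum_j x 0 j *: q (enum_val j) - (\sum_j x 0 j) *: q t0.
    rewrite mulmx_sum_row scaler_suml -sumrB; apply: eq_bigr => j _.
    by rewrite rowK scalerBr.
  apply: (@etrans _ _ (x *m Q)); last exact: xQ. rewrite E1; under eq_bigr do rewrite scalerBl scaler_suml.
  rewrite sumrB; congr (_ - _).
    rewrite -(part _ (fun j => x 0 j *: q (enum_val j))); apply: eq_bigr => i _; apply: eq_bigr => j /eqP ->; by [].
  move: (\sum_j x 0 j) => c; rewrite (bigD1 t0) //= eqxx mul1r big1 ?addr0 // => i /negbTE ->; by rewrite mul0r scale0r.
have mu_supp i : mu i != 0 -> i \in T.
  apply: contraR => iT; rewrite /mu big_pred0 => [|j].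
    have -> : (i == t0) = false by apply/negbTE; apply: contraNneq iT => ->.
    by rewrite mul0r subr0.
  by apply/negbTE; apply: contraNneq iT => <-.
have [i1 mu1] : exists i, 0 < mu i.
  have [i [j xj]] := matrix0Pn _ xn0; rewrite (ord1 i) in xj.
  have muj : mu (enum_val j) = x 0 j.
    rewrite /mu evt0 mul0r subr0 (big_pred1 j) // => j'.
    by rewrite /= (inj_eq enum_val_inj).
  case: (boolP [exists i, 0 < mu i]) => [/existsP //|]; rewrite negb_exists => /forallP hneg.
  have hm : forall i, predT i -> 0 <= - mu i.
    by move=> i' _; rewrite oppr_ge0 leNgt hneg.
  have := psumr_eq0P hm; rewrite sumrN mu_sum oppr0 => /(_ erefl (enum_val j) isT).
  by move/eqP; rewrite oppr_eq0 muj (negbTE xj).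
pose im := [arg min_(i < i1 | 0 < mu i) (l i / mu i)]%O.
have [im_pos im_min] : 0 < mu im /\ forall i, 0 < mu i -> l im / mu im <= l i / mu i.
  by rewrite /im; case: arg_minP => //= i0 h0 h; split=> // i; apply: h.
pose t := l im / mu im.
have t_ge0 : 0 <= t by rewrite divr_ge0 // ltW.
pose l' i := l i - t * mu i.
have l'supp i : l' i != 0 -> l i != 0.
  apply: contraNneq => li0; have iT : i \notin T by rewrite inE li0 eqxx.
  have : mu i = 0 by apply/eqP; apply: contraR iT; apply: mu_supp.
  by rewrite /l' li0 => ->; rewrite mulr0 subrr.
have l'im : l' im = 0.
  by rewrite /l' /t divfK ?subrr // gt_eqF.
have imT : im \in T by apply: mu_supp; rewrite gt_eqF.
have hcard : (#|[set i | l' i != 0%R]| <= N)%N.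
  rewrite -ltnS (leq_trans _ hN) // proper_card //; apply/properP; split.
    by apply/subsetP => i; rewrite !inE; apply: l'supp.
  by exists im => //; rewrite inE l'im eqxx.
have hl'0 i : 0 <= l' i.
  rewrite /l' subr_ge0; case: (ltrP 0 (mu i)) => hmu.
    by rewrite -ler_pdivlMr // im_min.
  by rewrite (le_trans (mulr_ge0_le0 t_ge0 hmu)).
have [l'' [h1 h2 h3 h4 h5]] := IH l' hcard hl'0 (fun i h => hlS i (l'supp i h)).
exists l''; split => //.
  by rewrite h3 /l' sumrB -mulr_sumr mu_sum mulr0 subr0.
rewrite h4 /l'; under eq_bigr do rewrite scalerBl -scalerA.
by rewrite sumrB -scaler_sumr mu_q scaler0 subr0.
Qed.
End Carath.

Local Open Scope ring_scope.
Section Pad.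
Variables (R : realType) (d : nat).
Local Notation V := 'rV[R]_d.

Lemma pad n' (lam : 'I_n' -> V) (Wt : V -> Prop) (hW : forall i, Wt (lam i))
  (L0 : seq V) (hL0u : uniq L0) (hL0W : forall y, y \in L0 -> Wt y) (r : nat)
  (hr : (r <= size L0)%N) (l : 'I_n' -> R) (rho : V) :
  (forall i, 0 <= l i) -> \sum_i l i = 1 -> rho = \sum_i l i *: lam i ->
  (#|[set i | l i != 0%R]| <= r)%N ->
  exists s : 'I_r -> V, injective s /\ (forall j, Wt (s j)) /\
    in_conv (fun x => exists j, x = s j) rho.
Proof.
move=> hl0 hl1 hrho hcard.
set X := [seq lam i | i <- enum [set i | l i != 0%R]].
set L := undup X ++ [seq y <- L0 | y \notin X].
have Lu : uniq L.
  rewrite cat_uniq undup_uniq filter_uniq // andbT /=.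
  by apply/hasPn => y; rewrite mem_filter mem_undup => /andP[].
have LW y : y \in L -> Wt y.
  by rewrite mem_cat mem_undup mem_filter => /orP[/mapP [i _ ->]|/andP[_ /hL0W]].
have sL : (r <= size L)%N.
  apply: (leq_trans hr); apply: uniq_leq_size => // y yL0.
  by rewrite mem_cat mem_undup mem_filter yL0 andbT orbN.
pose s (j : 'I_r) := nth 0 L j.
have sinj : injective s.
  move=> j j' /eqP; rewrite /s nth_uniq // ?(leq_trans (ltn_ord _) sL) //.
  by move/eqP/val_inj.
have hin i : l i != 0 -> exists j, lam i = s j.
  move=> li; have liX : lam i \in X by apply: map_f; rewrite mem_enum inE.
  have hlt : (index (lam i) L < r)%N.
    rewrite index_cat mem_undup liX.
    apply: (leq_trans _ (leq_trans (size_undup X) _)); first by rewrite index_mem mem_undup.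
    by rewrite size_map -cardE.
  by exists (Ordinal hlt); rewrite /s /= nth_index // mem_cat mem_undup liX.
have [i0 li0] : exists i, l i != 0.
  apply/existsP; apply: contraT; rewrite negb_exists => /forallP h.
  move: hl1; rewrite big1 => [/eqP|i _]; first by rewrite eq_sym oner_eq0.
  by move: (h i); rewrite negbK => /eqP.
have [j0 _] := hin i0 li0.
exists s; split => //; split.
  by move=> j; apply: LW; rewrite /s mem_nth // (leq_trans (ltn_ord j) sL).
exists n', (fun i => if l i != 0 then lam i else s j0), l; split.
  by move=> i; case: ifP => [/hin [j ->]|_]; eexists.
split => //; split => //; rewrite hrho; apply: eq_bigr => i _.
by case: ifP => // /negbFE /eqP ->; rewrite !scale0r.
Qed.
End Pad.

Section Decomp.
Variables (R : realType) (n d : nat) (A : 'I_d -> 'M[R[i]]_n).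
Local Notation C := R[i].
Variable P : 'M[C]_n.
Hypotheses (hPP : P *m adjmx P = 1%:M) (hPP' : adjmx P *m P = 1%:M)
  (hoff : forall k i j, i != j -> (P *m A k *m adjmx P) i j = 0)
  (hdiag : forall k i, conjc ((P *m A k *m adjmx P) i i) = (P *m A k *m adjmx P) i i).
Set Default Proof Using "All".

Definition Tm k := locked (P *m A k *m adjmx P).
Lemma TmE k : Tm k = P *m A k *m adjmx P. Proof. by rewrite /Tm -lock. Qed.
Definition lam (i : 'I_n) : 'rV[R]_d := \row_k complex.Re (Tm k i i).
Definition cf (x : 'cV[C]_n) i := (P *m x) i 0.

Lemma Tdiag k i : Tm k i i = (lam i 0 k)%:C.
Proof. rewrite /lam [X in _ = (X)%:C]mxE TmE; apply: creal_conj; exact: hdiag. Qed.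

Lemma A_decomp k : A k = adjmx P *m Tm k *m P.
Proof. by rewrite TmE !mulmxA hPP' mul1mx -mulmxA hPP' mulmx1. Qed.

Lemma Tm_mul k (y : 'cV[C]_n) i : (Tm k *m y) i 0 = (lam i 0 k)%:C * y i 0.
Proof.
rewrite mxE (bigD1 i) //= big1 ?addr0 ?Tdiag // => j ji.
by rewrite TmE hoff ?mul0r // eq_sym.
Qed.

Lemma adj_cf (x y : 'cV[C]_n) (M : 'M[C]_n) :
  (adjmx x *m (adjmx P *m M *m P) *m y) 0 0 = (adjmx (P *m x) *m M *m (P *m y)) 0 0.
Proof. by rewrite adjmxM !mulmxA. Qed.

Lemma inner_decomp (x y : 'cV[C]_n) :
  inner x y = \sum_i conjc (cf x i) * cf y i.
Proof.
rewrite /inner.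
have -> : adjmx x *m y = adjmx (P *m x) *m (P *m y).
  by rewrite adjmxM -mulmxA (mulmxA (adjmx P)) hPP' mul1mx.
rewrite mxE; apply: eq_bigr => i _; by rewrite adjmx_entry.
Qed.

Lemma innerA (x y : 'cV[C]_n) k :
  inner x (A k *m y) = \sum_i conjc (cf x i) * (lam i 0 k)%:C * cf y i.
Proof.
rewrite /inner A_decomp mulmxA adj_cf -mulmxA [LHS]mxE; apply: eq_bigr => i _.
by rewrite Tm_mul adjmx_entry mulrA.
Qed.

Lemma scale_entry (a : R) (v : 'rV[R]_d) k : (a *: v) 0 k = a * v 0 k.
Proof. by rewrite mxE. Qed.
Lemma istarE psi k : istar A psi 0 k = complex.Re (inner psi (A k *m psi)).
Proof. by rewrite /istar [LHS]mxE. Qed.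
Lemma distarE psi phi k : distar A psi phi 0 k =
  complex.Re (inner phi (A k *m psi) + inner psi (A k *m phi)).
Proof. by rewrite /distar [LHS]mxE. Qed.

Lemma istar_decomp psi :
  istar A psi = \sum_i complex.Re (conjc (cf psi i) * cf psi i) *: lam i.
Proof.
apply/rowP => k; rewrite istarE innerA cRe_sum summxE; apply: eq_bigr => i _.
by rewrite scale_entry mulrAC cReMl.
Qed.

Lemma distar_decomp psi phi :
  distar A psi phi = \sum_i complex.Re (conjc (cf phi i) * cf psi i + conjc (cf psi i) * cf phi i) *: lam i.
Proof.
apply/rowP => k; rewrite distarE !innerA cReD !cRe_sum -big_split summxE; apply: eq_bigr => i _.
by rewrite scale_entry cReD (mulrAC (conjc (cf phi i))) (mulrAC (conjc (cf psi i))) !cReMl mulrDl.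
Qed.

Lemma Re_inner psi phi :
  complex.Re (inner psi phi) = \sum_i complex.Re (conjc (cf psi i) * cf phi i).
Proof. by rewrite inner_decomp cRe_sum. Qed.

Lemma pairing_delta (a : 'rV[R]_d) k : pairing a (delta_mx 0 k) = a 0 k.
Proof.
rewrite /pairing (bigD1 k) //= big1 => [|j /negbTE jk]; last by rewrite mxE jk andbF mulr0.
by rewrite mxE !eqxx mulr1 addr0.
Qed.

Lemma scalec_entry (a : C) (M : 'cV[C]_n) j : (a *: M) j 0 = a * M j 0.
Proof. by rewrite mxE. Qed.

Lemma lam_weight i : weight A (lam i).
Proof.
pose e : 'cV[C]_n := delta_mx i 0.
have hT k : Tm k *m e = (lam i 0 k)%:C *: e.
  apply/matrixP => j l; rewrite (ord1 l) Tm_mul scalec_entry.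
  case: (eqVneq j i) => [->|ji] /=; first by [].
  have -> : e j 0 = 0 by rewrite /e mxE (negbTE ji).
  by rewrite !mulr0.
exists (adjmx P *m e); split.
  apply/negP => /eqP h; have := congr1 (mulmx P) h.
  rewrite mulmxA hPP mul1mx mulmx0 => /matrixP /(_ i 0); rewrite !mxE !eqxx /=.
  by move/eqP; rewrite oner_eq0.
have hk k : A k *m (adjmx P *m e) = (lam i 0 k)%:C *: (adjmx P *m e).
  by rewrite A_decomp -!mulmxA (mulmxA P) hPP mul1mx hT scalemxAr.
move=> v; rewrite /Defs.iota mulmx_suml /pairing rmorph_sum scaler_suml.
apply: eq_bigr => k _; rewrite -scalemxAl hk scalerA rmorphM /=.
by rewrite mulrC.
Qed.

Lemma weight_lam a : weight A a -> exists i, lam i = a.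
Proof.
move=> [x [xn0 hx]].
have hk k : A k *m x = (a 0 k)%:C *: x.
  by have := hx (delta_mx 0 k); rewrite iota_delta pairing_delta.
pose y := P *m x.
have hy k : Tm k *m y = (a 0 k)%:C *: y.
  by rewrite /y TmE -!mulmxA (mulmxA (adjmx P)) hPP' mul1mx hk scalemxAr.
have [i yi] : exists i, y i 0 != 0.
  apply/existsP; apply: contraR xn0; rewrite negb_exists => /forallP yz.
  have y0 : y = 0 by apply/matrixP => i j; rewrite (ord1 j); move: (yz i); rewrite negbK => /eqP ->; rewrite mxE.
  by rewrite -[x]mul1mx -hPP' -mulmxA -/y y0 mulmx0.
exists i; apply/rowP => k.
have := congr1 (fun M : 'cV[C]_n => M i 0) (hy k).
rewrite /= Tm_mul scalec_entry => /(mulIf yi) h.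
by case: h.
Qed.
End Decomp.

Local Open Scope ring_scope.

Section Main.
Variables (R : realType) (n d : nat) (A : 'I_d -> 'M[R[i]]_n).
Local Notation C := R[i].
Local Notation V := 'rV[R]_d.
Variable P : 'M[C]_n.
Hypotheses (hPP : P *m adjmx P = 1%:M) (hPP' : adjmx P *m P = 1%:M)
  (hoff : forall k i j, i != j -> (P *m A k *m adjmx P) i j = 0)
  (hdiag : forall k i, conjc ((P *m A k *m adjmx P) i i) = (P *m A k *m adjmx P) i i).
Set Default Proof Using "All".

Let ISd := istar_decomp hPP hPP' hoff hdiag.
Let DSd := distar_decomp hPP hPP' hoff hdiag.
Let REi := Re_inner hPP hPP' hoff hdiag.
Let INd := inner_decomp hPP hPP' hoff hdiag.
Let LW := lam_weight hPP hPP' hoff hdiag.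
Let WL := weight_lam hPP hPP' hoff hdiag.
Local Notation lam := (lam A P).

Lemma cf_adj (b : 'cV[C]_n) i : cf P (adjmx P *m b) i = b i 0.
Proof. by rewrite /cf mulmxA hPP mul1mx. Qed.

Lemma pick1 (U : zmodType) (i0 : 'I_n) (F : 'I_n -> U) (c : R) (g : R -> U -> U)
  (g0 : forall u, g 0 u = 0) (g1 : forall u, g 1 u = u) :
  \sum_i g ((i == i0)%:R * c) (F i) = g c (F i0).
Proof.
rewrite (bigD1 i0) //= eqxx mul1r big1 ?addr0 // => i /negbTE ->.
by rewrite mul0r g0.
Qed.

Lemma pick1s (i0 : 'I_n) (F : 'I_n -> V) (c : R) :
  \sum_i ((i == i0)%:R * c) *: F i = c *: F i0.
Proof. exact: (@pick1 _ i0 F c (fun a u => a *: u) (fun u => scale0r u) (fun u => scale1r u)). Qed.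
Lemma pick1r (i0 : 'I_n) (c : R) : \sum_(i < n) (i == i0)%:R * c = c.
Proof. rewrite (bigD1 i0) //= eqxx mul1r big1 ?addr0 // => i /negbTE ->; by rewrite mul0r. Qed.

Lemma L0_big (r : nat) (hr : conv_dim A r) (i0 : 'I_n) :
  (r <= size (undup [seq lam i | i <- enum 'I_n]))%N.
Proof.
set L0 := undup _.
have inL0 i : lam i \in L0 by rewrite mem_undup; apply: map_f; rewrite mem_enum.
have szp : (0 < size L0)%N.
  by rewrite lt0n size_eq0; apply/eqP => e; move: (inL0 i0); rewrite e.
set u := (size L0).-1.
have szu : size L0 = u.+1 by rewrite prednK.
case: hr => [[m [D [dfD <-]]] _].
have idx a : weight A a -> (index a L0 < u.+1)%N.
  by move/WL => [i <-]; rewrite -szu index_mem.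
suff hD : (\rank D <= u)%N by rewrite szu leqW.
apply: (@rank_diffs R d u m (fun j : 'I_u.+1 => nth 0 L0 j) D) => i.
have [a [b [ha [hb ->]]]] := dfD i.
have [ia eia] := WL ha; have [ib eib] := WL hb.
exists (Ordinal (idx a ha)), (Ordinal (idx b hb)) => /=.
by rewrite !nth_index // -?eia -?eib.
Qed.

Lemma forward (r : nat) (hr : conv_dim A r) rho :
  critical_value A rho -> exists s : 'I_r -> 'rV[R]_d,
    injective s /\ (forall j, weight A (s j)) /\ in_conv (fun x => exists j, x = s j) rho.
Proof.
move=> [psi [hpsi1 [hist [w [hw hnot]]]]].
pose c i := cf P psi i.
pose l i := complex.Re (conjc (c i) * c i).
have l_ge0 i : 0 <= l i by apply: cnorm_ge0.
have l_sum : \sum_i l i = 1.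
  by have := congr1 (@complex.Re R) hpsi1; rewrite REi.
have hrho : rho = \sum_i l i *: lam i by rewrite -hist ISd.
have l_c i : l i != 0 -> c i != 0.
  by apply: contraNneq => ci; rewrite /l ci mulr0.
have [i0 ci0] : exists i, c i != 0.
  apply/existsP; apply: contraT; rewrite negb_exists => /forallP h.
  move: l_sum; rewrite big1 => [/eqP|i _]; first by rewrite eq_sym oner_eq0.
  by move: (h i); rewrite negbK => /eqP ci; rewrite /l ci mulr0.
pose B := \matrix_(i < n) ((c i != 0)%:R *: (lam i - lam i0)).
have rowB i : row i B = (c i != 0)%:R *: (lam i - lam i0) by rewrite rowK.
have dfB : diff_family A B.
  move=> i; rewrite rowB; case: (c i != 0).
    by exists (lam i), (lam i0); rewrite scale1r; split; [apply: LW|split; [apply: LW|]].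
  by exists (lam i0), (lam i0); rewrite scale0r subrr; split; [apply: LW|split; [apply: LW|]].
case: (hr) => _ hr2.
have rB : (\rank B < r)%N.
  rewrite ltnNge; apply/negP => rle.
  have rBeq : \rank B = r by apply/eqP; rewrite eqn_leq rle hr2.
  have sub v : (exists a b, [/\ weight A a, weight A b & v = a - b]) -> (v <= B)%MS.
    move=> [a [b [ha hb ->]]].
    have df' : diff_family A (col_mx B (a - b)).
      move=> i; case: (split_ordP i) => j ->; first by rewrite rowKu; apply: dfB.
      by rewrite rowKd row_id; exists a, b.
    have hsub : (B <= col_mx B (a - b))%MS.
      by apply/row_subP => i; rewrite -(rowKu i B (a - b)); apply: row_sub.
    have e : (col_mx B (a - b) <= B)%MS.
      by rewrite -(mxrank_leqif_sup hsub).2 eqn_leq mxrankS //= rBeq hr2.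
    by move: e; rewrite col_mx_sub => /andP[].
  have wB : (w <= B)%MS.
    case: hw => m [a [bb [cc [ha [hb ->]]]]].
    by apply: summx_sub => i _; apply: scalemx_sub; apply: sub; exists (a i), (bb i).
  case/submxP: wB => y hy.
  pose sv i := (c i != 0)%:R * y 0 i.
  pose t i := sv i - (i == i0)%:R * \sum_j sv j.
  have hw' : w = \sum_i t i *: lam i.
    rewrite hy mulmx_sum_row; under eq_bigr do rewrite rowB scalerA scalerBr.
    rewrite sumrB /t; under [RHS]eq_bigr do rewrite scalerBl.
    rewrite sumrB pick1s scaler_suml.
    by congr (_ - _); apply: eq_bigr => i _; rewrite /sv mulrC.
  have t_sum : \sum_i t i = 0.
    by rewrite sumrB pick1r subrr.
  have t_supp i : c i = 0 -> t i = 0.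
    move=> ci; have ii0 : (i == i0) = false.
      by apply/negbTE; apply: contraNneq ci0 => <-; rewrite ci.
    by rewrite /t /sv ci eqxx ii0 !mul0r subr0.
  pose bvec : 'cV[C]_n := \col_i ((t i / 2)%:C / conjc (c i)).
  pose phi := adjmx P *m bvec.
  have cfphi i : cf P phi i = (t i / 2)%:C / conjc (c i) by rewrite cf_adj mxE.
  have key i : conjc (c i) * cf P phi i = (t i / 2)%:C.
    rewrite cfphi; case: (eqVneq (c i) 0) => [ci|ci].
      by rewrite ci conjc0 mul0r t_supp // mul0r.
    by rewrite mulrC divfK // conjc_eq0.
  have key2 i : conjc (cf P phi i) * c i = (t i / 2)%:C.
    by have := congr1 (@conjc _) (key i); rewrite cconjM conjcK conjc_real mulrC.
  have tang : complex.Re (inner psi phi) = 0.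
    rewrite REi; under eq_bigr do rewrite -/(c _) key.
    by rewrite -mulr_suml t_sum mul0r.
  apply: (hnot phi tang); rewrite DSd hw'; apply: eq_bigr => i _.
  rewrite -/(c i) key2 key cReD /=; congr (_ *: _); lra.
have hS i j : i \in [set i | c i != 0] -> j \in [set i | c i != 0] -> (lam i - lam j <= B)%MS.
  rewrite !inE => hi hj.
  have -> : lam i - lam j = row i B - row j B.
    by rewrite !rowB hi hj !scale1r opprB addrA subrK.
  by apply: subB_sub; apply: row_sub.
have hlS i : l i != 0 -> i \in [set i | c i != 0] by move/l_c; rewrite inE.
have [l' [hl'0 _ hsum hq hcard]] := carath rB hS l_ge0 hlS.
have L0W y : y \in undup [seq lam i | i <- enum 'I_n] -> weight A y.
  by rewrite mem_undup => /mapP [i _ ->]; apply: LW.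
apply: (pad LW (undup_uniq _) L0W (L0_big hr i0) hl'0) => //.
  by rewrite hsum l_sum.
by rewrite hq.
Qed.

Lemma backward (r : nat) (hr : conv_dim A r) rho :
  (exists s : 'I_r -> 'rV[R]_d,
    injective s /\ (forall j, weight A (s j)) /\ in_conv (fun x => exists j, x = s j) rho) ->
  critical_value A rho.
Proof.
move=> [s [_ [hs [m [w [l [hw [hl0 [hl1 hrho]]]]]]]]].
have hwl i : exists i', lam i' = w i.
  by have [j ->] := hw i; apply: WL (hs j).
have [sg hsg] := fin_all_exists hwl.
have [i0 li0] : exists i, l i != 0.
  apply/existsP; apply: contraT; rewrite negb_exists => /forallP h.
  move: hl1; rewrite big1 => [/eqP|i _]; first by rewrite eq_sym oner_eq0.
  by move: (h i); rewrite negbK => /eqP.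
case: r hr s hs hw => [|r] hr s hs hw; first by have [[]] := hw i0.
pose cc i' := \sum_(i | sg i == i') l i.
have cc0 i' : 0 <= cc i' by apply: sumr_ge0.
pose bv : 'cV[C]_n := \col_i' (Num.sqrt (cc i'))%:C.
pose psi := adjmx P *m bv.
have cfpsi i' : cf P psi i' = (Num.sqrt (cc i'))%:C by rewrite cf_adj mxE.
have nrm i' : conjc (cf P psi i') * cf P psi i' = (cc i')%:C.
  by rewrite cfpsi conj_real_mul -expr2 sqr_sqrtr.
have ccsum : \sum_i' cc i' = 1.
  by rewrite -hl1 (partition_big sg predT).
have ccq : \sum_i' cc i' *: lam i' = rho.
  rewrite hrho (partition_big sg predT) //; apply: eq_bigr => i' _.
  rewrite /cc scaler_suml; apply: eq_bigr => i /eqP <-; by rewrite hsg.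
have [mD [D [dfD rD]]] := hr.1.
have [i1 ni1] : exists i1, ~~ (row i1 D <= dmx s)%MS.
  apply/existsP; apply: contraT; rewrite negb_exists => /forallP h.
  have : (D <= dmx s)%MS by apply/row_subP => i; move: (h i); rewrite negbK.
  move/mxrankS; rewrite rD => h'.
  by have := leq_trans h' (rank_leq_row _); rewrite ltnn.
have [a [b [ha [hb hab]]]] := dfD i1.
exists psi; split.
  by rewrite INd; under eq_bigr do rewrite nrm; rewrite -rmorph_sum ccsum.
split.
  by rewrite ISd -ccq; apply: eq_bigr => i' _; rewrite nrm.
exists (a - b); split.
  exists 1%N, (fun _ => a), (fun _ => b), (fun _ => 1); split => //; split => //.
  by rewrite big_ord1 scale1r.
move=> phi tang hd; apply: (negP ni1); rewrite hab -hd DSd.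
pose tau i' := complex.Re (conjc (cf P phi i') * cf P psi i' + conjc (cf P psi i') * cf P phi i').
have tau2 i' : tau i' = 2 * complex.Re (conjc (cf P psi i') * cf P phi i').
  by rewrite /tau cReD cRe_conj_sym mulr2n mulrDl mul1r.
have tsum : \sum_i' tau i' = 0.
  under eq_bigr do rewrite tau2.
  by rewrite -mulr_sumr -REi tang mulr0.
have -> : \sum_i' tau i' *: lam i' = \sum_i' tau i' *: (lam i' - s ord0).
  under [RHS]eq_bigr do rewrite scalerBr.
  by rewrite sumrB -scaler_suml tsum scale0r subr0.
apply: summx_sub => i' _.
case: (eqVneq (cc i') 0) => [c0|c0].
  have : cf P psi i' = 0 by rewrite cfpsi c0 sqrtr0.
  by rewrite /tau => ->; rewrite conjc0 !mul0r mulr0 addr0 scale0r sub0mx.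
apply: scalemx_sub.
have [i /eqP ei] : exists i, sg i == i'.
  apply/existsP; apply: contraR c0; rewrite negb_exists => /forallP h.
  by apply/eqP; rewrite /cc big_pred0 // => i; apply: negbTE (h i).
rewrite -ei hsg; have [j ->] := hw i; exact: dmx_sub.
Qed.

End Main.

Unset Implicit Arguments. Set Strict Implicit. Set Printing Implicit Defensive.
Local Close Scope complex_scope.
Local Open Scope ring_scope.

Theorem proposition4p16 (R : realType) (n d : nat)
  (A : 'I_d -> 'M[R[i]]_n) (W : 'M[R[i]]_n)
  (hA : forall k, herm_op (A k)) (hW : herm_op W)
  (hab : abelian_theory A)
  (r : nat) (hr : conv_dim A r)
  (rho : 'rV[R]_d) (hrho : in_conv (weight A) rho) :
  critical_value A rho <->
  exists s : 'I_r -> 'rV[R]_d,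
    injective s /\ (forall j, weight A (s j)) /\
    in_conv (fun x => exists j, x = s j) rho.
Proof.
have [P [hPP hPP' hoff hdiag]] := spectral_ex hA hab.
split.
  exact: (forward hPP hPP' hoff hdiag hr).
exact: (backward hPP hPP' hoff hdiag hr).
Qed.
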